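(* Let $\Gamma$ be a splice diagram satisfying the edge determinant condition. Then the piecewise linear map $\rho:\Gamma\to\Delta_{n-1}$ is injective.
   Context: A splice diagram is a finite tree $\Gamma$ with at least one vertex of valency $\geq3$ and no vertex of valency $2$; vertices of valency $1$ are leaves, others nodes. For each node $v$ and edge $e$ at $v$ a positive integer weight $d_{v,e}$ is given; $d_{v,u}$ is the weight at $v$ of the edge toward $u$. For distinct vertices $u,v$, $\ell_{u,v}$ is the product of all $d_{w,e}$ with $w$ a node on the geodesic $[u,v]$ and $e$ an edge at $w$ not in $[u,v]$. Edge determinant condition: $d_{u,v}d_{v,u}>\ell_{u,v}$ for every edge $[u,v]$ between two nodes. With $n$ leaves, $\Delta_{n-1}\subset\mathbb{R}^n$ is the standard simplex with vertices the standard basis vectors $w_\lambda$ indexed by the leaves; $w_u=\sum_\lambda\ell_{u,\lambda}w_\lambda$ for a node $u$. The map $\rho$ sends each vertex $u$ to $w_u/|w_u|$ ($1$-norm), and each edge (identified with $[0,1]$) affinely onto the segment between the images of its endpoints. *)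

(* Defs.v *)
From HB Require Import structures.
From mathcomp Require Import all_boot all_order all_algebra.
From mathcomp Require Import boolp.
Set Implicit Arguments. Unset Strict Implicit. Unset Printing Implicit Defensive.
Import Order.TTheory GRing.Theory Num.Theory.

Section SpliceDiagrams.
Variables (V : finType) (adj : rel V).

Definition valency (v : V) : nat := #|[set x | adj v x]|.
Definition is_leaf (v : V) : bool := valency v == 1%N.
Definition is_node (v : V) : bool := valency v != 1%N.

Definition simple_path (u v : V) (p : seq V) : bool :=
  [&& path adj u p, last u p == v & uniq (u :: p)].

Definition is_tree : Prop :=
  symmetric adj /\ irreflexive adj /\
  forall u v : V, exists! p : seq V, simple_path u v p.

Definition splice_tree : Prop :=
  is_tree /\ (exists v : V, 3 <= valency v)%N /\ (forall v : V, valency v != 2%N).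

Definition on_geod (u v w : V) : Prop :=
  exists p, simple_path u v p /\ w \in u :: p.

Definition geod_edge (u v w x : V) : Prop :=
  exists p, simple_path u v p /\
    (infix [:: w; x] (u :: p) || infix [:: x; w] (u :: p)).

Variable d : V -> V -> nat.  (* d w x = weight at node w of the edge towards neighbour x *)

Definition weights_pos : Prop :=
  forall w x : V, is_node w -> adj w x -> (0 < d w x)%N.

Definition ell (u v : V) : nat :=
  \prod_(w | `[< on_geod u v w >] && is_node w)
     \prod_(x | adj w x && ~~ `[< geod_edge u v w x >]) d w x.

Definition edge_determinant : Prop :=
  forall u v : V, adj u v -> is_node u -> is_node v ->
    (ell u v < d u v * d v u)%N.

Variable R : realFieldType.
Local Open Scope ring_scope.

(* points of R^n, coordinates indexed by the leaves (non-leaf coordinates 0) *)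
Definition wvec (u : V) : V -> R :=
  fun y => if is_leaf y then
             (if is_leaf u then (y == u)%:R else (ell u y)%:R)
           else 0.

Definition norm1 (f : V -> R) : R := \sum_(y : V) `|f y|.

Definition rho_vert (u : V) : V -> R := fun y => wvec u y / norm1 (wvec u).

Definition rho_pt (a b : V) (t : R) : V -> R :=
  fun y => (1 - t) * rho_vert a y + t * rho_vert b y.

(* position of that point in the geometric realization |Gamma| of the tree,
   embedded as a simplicial complex in R^V: (1-t) e_a + t e_b *)
Definition realize (a b : V) (t : R) : V -> R :=
  fun y => (1 - t) * (y == a)%:R + t * (y == b)%:R.

End SpliceDiagrams.

(* Main.v *)
Require Import Defs.
From HB Require Import structures.
From mathcomp Require Import all_boot all_order all_algebra.
From mathcomp Require Import boolp.
From mathcomp Require Import ring lra.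
Set Implicit Arguments. Unset Strict Implicit. Unset Printing Implicit Defensive.
Import Order.TTheory GRing.Theory Num.Theory.

Section Main.
Variables (V : finType) (adj : rel V).
Hypothesis adj_sym : symmetric adj.
Hypothesis adj_irr : irreflexive adj.
Hypothesis path_ex : forall u v : V, exists p, simple_path adj u v p.
Hypothesis path_un : forall u v p1 p2, simple_path adj u v p1 -> simple_path adj u v p2 -> p1 = p2.

Lemma sp_nil u : simple_path adj u u [::].
Proof. by rewrite /simple_path /= eqxx. Qed.

Lemma sp_cons x y z q : adj x y -> simple_path adj y z q -> x \notin y :: q ->
  simple_path adj x z (y :: q).
Proof.
rewrite /simple_path => axy /and3P[pq lq uq] nx.
apply/and3P; split; first by rewrite /= axy.
  by [].
by rewrite cons_uniq nx.
Qed.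

Lemma sp_inv u z y q : simple_path adj u z (y :: q) ->
  [/\ adj u y, simple_path adj y z q & u \notin y :: q].
Proof.
rewrite /simple_path /= => /and3P[/andP[a pq] lq /andP[nu uq]].
by rewrite a pq lq nu uq.
Qed.

Lemma sp_rcons u v w p : simple_path adj u v p -> adj v w -> w \notin u :: p ->
  simple_path adj u w (rcons p w).
Proof.
rewrite /simple_path => /and3P[pp /eqP lp up] avw nw.
apply/and3P; split; first by rewrite rcons_path pp lp avw.
  by rewrite last_rcons.
by rewrite -rcons_cons rcons_uniq nw up.
Qed.

Lemma sp_adj u v : adj u v -> simple_path adj u v [:: v].
Proof.
move=> a; rewrite /simple_path /= a eqxx /= inE andbT.
by apply/eqP => e; subst; rewrite adj_irr in a.
Qed.

Lemma sp_last u v p : simple_path adj u v p -> v \in u :: p.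
Proof. by case/and3P => _ /eqP <- _; apply: mem_last. Qed.

Lemma sp_split u v p w : simple_path adj u v p -> w \in u :: p ->
  exists p1 p2, [/\ p = p1 ++ p2, simple_path adj u w p1 & simple_path adj w v p2].
Proof.
move=> sp win; case/splitPl: win sp => p1 p2 lw sp; exists p1, p2.
move: sp; rewrite /simple_path cat_path last_cat lw => /and3P[/andP[pa1 pa2] l2 uu].
have : uniq ((u :: p1) ++ p2) by [].
rewrite cat_uniq => /and3P[u1 hd u2].
split => //; first by rewrite pa1 eqxx u1.
rewrite pa2 l2 /= u2 andbT.
apply/negP => w2; move/hasP: hd; apply; exists w => //.
by rewrite -lw mem_last.
Qed.

Lemma sp_uniq u v p : simple_path adj u v p -> uniq (u :: p).
Proof. by case/and3P. Qed.

Definition side (x y z : V) : Prop :=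
  exists q, simple_path adj y z q /\ x \notin y :: q.

Lemma side_self x y : x != y -> side x y y.
Proof. by move=> n; exists [::]; rewrite sp_nil mem_seq1. Qed.

Lemma side_not x y : ~ side x y x.
Proof. by case=> q [/sp_last h n]; rewrite h in n. Qed.

Lemma side_dich x y z : adj x y -> side x y z \/ side y x z.
Proof.
move=> axy; have [p sp] := path_ex x z.
case yin: (y \in x :: p).
  have [p1 [p2 [ep s1 s2]]] := sp_split sp yin.
  have := path_un s1 (sp_adj axy) => e1; subst p1 p; left; exists p2; split=> //.
  by move: (sp_uniq sp) => /= /andP[].
right; exists p; split => //; by rewrite yin.
Qed.

Lemma side_disj x y z : adj x y -> side x y z -> side y x z -> False.
Proof.
move=> axy [q [sq nq]] [p [sp np]].
have := path_un sp (sp_cons axy sq nq) => e; subst p.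
by rewrite !inE eqxx orbT in np.
Qed.


Lemma side_step x y y' l : adj x y -> adj y y' -> x != y' -> side y x l -> side y' y l.
Proof.
move=> axy ayy' nxy' [s [ss ns]]; exists (x :: s); split.
  by apply: sp_cons => //; rewrite adj_sym.
rewrite !inE negb_or; apply/andP; split.
  by apply/eqP => e; subst; rewrite adj_irr in ayy'.
rewrite negb_or eq_sym nxy' /=; apply/negP => y's.
have yx : y' \in x :: s by rewrite inE y's orbT.
have [p1 [p2 [ep s1 _]]] := sp_split ss yx.
have s2 : simple_path adj x y' [:: y; y'].
  apply: sp_cons => //; first exact: sp_adj.
  rewrite !inE negb_or nxy' andbT; apply/eqP => e; subst; by rewrite adj_irr in axy.
have := path_un s1 s2 => e; subst.
by rewrite !inE eqxx !orbT in ns.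
Qed.

Lemma cross a b a' b' : adj a b -> adj a' b' -> side a b a' -> side b a b' ->
  a' = b /\ b' = a.
Proof.
move=> aab aa'b' [q [sq nq]] [p [sp np]].
have aba : adj b a by rewrite adj_sym.
have spb := sp_cons aba sp np.
case b'in : (b' \in b :: q).
  have [p1 [p2 [eq s1 _]]] := sp_split sq b'in.
  have e := path_un s1 spb; subst.
  by rewrite !inE eqxx !orbT in nq.
have := sp_rcons sq aa'b' (negbT b'in) => s2.
have := path_un s2 spb; case: q sq nq {s2 b'in} => [|c q] sq nq /=.
  case => <-; split => //; by case/and3P: sq => _ /eqP.
by case => e _; subst; rewrite !inE eqxx !orbT in nq.
Qed.


Lemma sp_pred u v p : simple_path adj u v p -> p != [::] ->
  exists pr, pr \in u :: p /\ adj pr v.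
Proof.
case: (lastP p) => [//|p' z] sp _; exists (last u p'); split.
  by rewrite -rcons_cons mem_rcons inE mem_last orbT.
case/and3P: sp; rewrite rcons_path last_rcons => /andP[_ h] /eqP <- _ //.
Qed.

Lemma pred_unique u v p w1 w2 : simple_path adj u v p ->
  w1 \in u :: p -> adj w1 v -> w2 \in u :: p -> adj w2 v -> w1 = w2.
Proof.
move=> sp i1 a1 i2 a2.
have [p1 [p2 [e1 s1 t1]]] := sp_split sp i1.
have [q1 [q2 [e2 s2 t2]]] := sp_split sp i2.
have := path_un t1 (sp_adj a1) => ?; have := path_un t2 (sp_adj a2) => ?; subst.
have e3 : p1 = q1 by apply: (@rcons_injl _ v); rewrite -!cats1.
subst q1.
case/and3P: s1 => _ /eqP <- _; by case/and3P: s2 => _ /eqP <- _.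
Qed.

Lemma leaf_node l : is_node adj l = ~~ is_leaf adj l.
Proof. by []. Qed.

Lemma two_nbrs v a b : adj v a -> adj v b -> a != b -> is_node adj v.
Proof.
move=> va vb nab; rewrite /is_node /valency.
have : #|[set a; b]| <= #|[set x | adj v x]|.
  by apply: subset_leq_card; apply/subsetP => t; rewrite !inE => /orP[]/eqP ->.
by rewrite cards2 nab => h; apply/eqP => e; rewrite e in h.
Qed.

Lemma side_extend x y z s : adj x y -> simple_path adj y z s -> x \notin y :: s ->
  ~~ is_leaf adj z ->
  exists w, simple_path adj y w (rcons s w) /\ x \notin y :: rcons s w.
Proof.
move=> axy sz nx nl.
have P := sp_cons axy sz nx.
have [pr [prin apr]] := sp_pred P isT.
have [w [azw nw]] : exists w, adj z w /\ w != pr.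
  apply: contrapT => H.
  have : [set t | adj z t] = [set pr].
    apply/setP => t; rewrite !inE; apply/idP/idP.
      move=> azt; apply/eqP; apply: contrapT => ntp; apply: H; exists t; split => //.
      by apply/eqP.
    by move/eqP ->; rewrite adj_sym.
  by move=> e; move: nl; rewrite /is_leaf /valency e cards1.
have wn : w \notin x :: y :: s.
  apply/negP => win; move/eqP: nw; apply.
  apply: (pred_unique P win _ prin apr); by rewrite adj_sym.
have := sp_rcons P azw wn; rewrite rcons_cons => /sp_inv [_ h1 h2].
by exists w.
Qed.

Lemma side_leaf x y : adj x y -> exists l, is_leaf adj l /\ side x y l.
Proof.
move=> axy; apply: contrapT => H.
have long : forall n, exists z s, [/\ simple_path adj y z s, x \notin y :: s & n <= size s].
  elim => [|n [z [s [sz nx ns]]]].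
    exists y, [::]; split => //; first exact: sp_nil.
    by rewrite mem_seq1; apply/eqP => e; subst; rewrite adj_irr in axy.
  have nl : ~~ is_leaf adj z.
    by apply/negP => lz; apply: H; exists z; split => //; exists s.
  have [w [h1 h2]] := side_extend axy sz nx nl.
  by exists w, (rcons s w); split => //; rewrite size_rcons.
have [z [s [sz _ ns]]] := long #|V|.
have := sp_uniq sz => /card_uniqP e.
have := max_card (mem (y :: s)); rewrite e /= => h.
by move: (leq_trans h ns); rewrite ltnn.
Qed.


Variable d : V -> V -> nat.
Hypothesis wpos : weights_pos adj d.

Definition IE (s : seq V) w t := infix [:: w; t] s || infix [:: t; w] s.
Definition Pf x y := (\prod_(w | adj x w && (w != y)) d x w)%N.
Definition Ff s w := (\prod_(t | adj w t && ~~ IE s w t) d w t)%N.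

Lemma on_geodE u v p w : simple_path adj u v p -> `[< on_geod adj u v w >] = (w \in u :: p).
Proof.
move=> sp; apply: (asbool_equiv_eqP idP); split.
  by case=> p' [sp' wi]; rewrite (path_un sp sp').
by move=> wi; exists p.
Qed.

Lemma geod_edgeE u v p w t : simple_path adj u v p ->
  `[< geod_edge adj u v w t >] = IE (u :: p) w t.
Proof.
move=> sp; apply: (asbool_equiv_eqP idP); split.
  by case=> p' [sp' wi]; rewrite (path_un sp sp').
by move=> wi; exists p.
Qed.

Lemma ell_path u v p : simple_path adj u v p ->
  ell adj d u v = (\prod_(w | (w \in u :: p) && is_node adj w) Ff (u :: p) w)%N.
Proof.
move=> sp; rewrite /ell; apply: eq_big => w; first by rewrite (on_geodE w sp).
by move=> _; apply: eq_bigl => t; rewrite (geod_edgeE w t sp).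
Qed.

Lemma IE_mem s w t : IE s w t -> (w \in s) && (t \in s).
Proof.
by case/orP => /infixW/mem_subseq h; rewrite !h ?inE ?eqxx ?orbT.
Qed.

Lemma IE_cons2 x y q w t : IE (x :: y :: q) w t =
  [|| (x == w) && (y == t), (x == t) && (y == w) | IE (y :: q) w t].
Proof.
rewrite /IE infix_consl [infix [:: t; w] _]infix_consl /=.
rewrite (eq_sym x w) (eq_sym y t) (eq_sym x t) (eq_sym y w).
rewrite !prefix0s !andbT; by case: (w == x); case: (t == y); case: (t == x); case: (w == y); case: (prefix _ _); case: (prefix _ _); case: (infix _ _); case: (infix _ _).
Qed.

Lemma ell_step x y z q : adj x y -> is_node adj x -> is_node adj y ->
  simple_path adj y z q -> x \notin y :: q ->
  (ell adj d x z * d y x = Pf x y * ell adj d y z)%N.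
Proof.
move=> axy nx ny sq xq.
have sx := sp_cons axy sq xq.
have xny : x != y by apply/eqP => e; subst; rewrite adj_irr in axy.
have IEx t : IE (y :: q) x t = false.
  by apply/negP => /IE_mem/andP[h _]; rewrite h in xq.
have IEx' t : IE (y :: q) t x = false.
  by apply/negP => /IE_mem/andP[_ h]; rewrite h in xq.
rewrite (ell_path sx) (ell_path sq).
rewrite (bigD1 x) /=; last by rewrite inE eqxx nx.
have FX : Ff [:: x, y & q] x = Pf x y.
  apply: eq_bigl => t; rewrite IE_cons2 IEx eqxx /= orbF.
  case axt: (adj x t) => //=.
  have -> : (x == t) = false by apply/eqP => e; subst; rewrite adj_irr in axt.
  by rewrite andFb orbF eq_sym.
have eqset w : ((w \in [:: x, y & q]) && is_node adj w) && (w != x) =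
               (w \in y :: q) && is_node adj w.
  case: (eqVneq w x) => [->|wx]; first by rewrite (negPf xq) andbF.
  by rewrite andbT in_cons (negPf wx).
rewrite (eq_bigl _ _ eqset) FX.
rewrite (bigD1 y) /=; last by rewrite inE eqxx ny.
rewrite [in RHS](bigD1 y) /=; last by rewrite inE eqxx ny.
have Rest : (\prod_(i | ((i \in y :: q) && is_node adj i) && (i != y)) Ff [:: x, y & q] i =
             \prod_(i | ((i \in y :: q) && is_node adj i) && (i != y)) Ff (y :: q) i)%N.
  apply: eq_bigr => w /andP[/andP[wi _] wy].
  have wx : (x == w) = false by apply/eqP => e; subst; rewrite wi in xq.
  by apply: eq_bigl => t; rewrite IE_cons2 wx [y == w]eq_sym (negPf wy) andbF.
have FY : Ff (y :: q) y = (d y x * Ff [:: x, y & q] y)%N.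
  rewrite /Ff (bigD1 x) /=; last by rewrite IEx' adj_sym axy.
  congr (_ * _)%N; apply: eq_bigl => t.
  rewrite IE_cons2 (negPf xny) eqxx /= andbT negb_or -andbA; congr (_ && _).
  by rewrite andbC eq_sym.
rewrite Rest FY.
by ring.
Qed.


Lemma ell_self y : is_node adj y -> ell adj d y y = (\prod_(t | adj y t) d y t)%N.
Proof.
move=> ny; rewrite (ell_path (sp_nil y)) (big_pred1 y).
  by apply: eq_bigl => t; rewrite /IE /= !andbF andbT.
by move=> w; rewrite /= mem_seq1; case: eqP => // ->.
Qed.

Lemma ell_adj x y : adj x y -> is_node adj x -> is_node adj y ->
  ell adj d x y = (Pf x y * Pf y x)%N.
Proof.
move=> axy nx ny.
have xny : x != y by apply/eqP => e; subst; rewrite adj_irr in axy.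
have := ell_step axy nx ny (sp_nil y) (_ : x \notin [:: y]); rewrite mem_seq1 xny => /(_ isT).
rewrite ell_self // (bigD1 x) /=; last by rewrite adj_sym.
have dpos : (0 < d y x)%N by apply: wpos => //; rewrite adj_sym.
move=> e; apply/eqP; rewrite -(eqn_pmul2r dpos) e; apply/eqP; rewrite /Pf; ring.
Qed.

Lemma ell_gt0 u v : (0 < ell adj d u v)%N.
Proof.
apply: prodn_cond_gt0 => w /andP[_ nw]; apply: prodn_cond_gt0 => t /andP[a _].
exact: wpos.
Qed.

Hypothesis det : edge_determinant adj d.

Lemma det_lt x y : adj x y -> is_node adj x -> is_node adj y ->
  (Pf x y * Pf y x < d x y * d y x)%N.
Proof. by move=> a nx ny; rewrite -ell_adj //; apply: det. Qed.

Lemma Pf_gt0 x y : is_node adj x -> (0 < Pf x y)%N.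
Proof. by move=> nx; apply: prodn_cond_gt0 => t /andP[a _]; exact: wpos. Qed.

Hypothesis exnode : exists v : V, (3 <= valency adj v)%N.

Lemma exists_leaf : exists l, is_leaf adj l.
Proof.
case: exnode => v hv.
have : [set x | adj v x] != set0.
  by rewrite -card_gt0; move: hv; rewrite /valency; case: #|_|.
case/set0Pn => a; rewrite inE => ava.
by have [l [hl _]] := side_leaf ava; exists l.
Qed.

Variable R : realFieldType.
Local Open Scope ring_scope.

Local Notation L := (is_leaf adj).
Local Notation w := (wvec adj d R).
Local Notation rv := (rho_vert adj d R).

Definition Bs (S : pred V) (f : V -> R) := \sum_(l | L l && S l) f l.
Definition Tot (f : V -> R) := \sum_(l | L l) f l.

Lemma w_ge0 z l : 0 <= w z l.
Proof. by rewrite /wvec; case: ifP => // _; case: ifP. Qed.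

Lemma w_nonleaf z l : ~~ L l -> w z l = 0.
Proof. by rewrite /wvec => /negPf ->. Qed.

Lemma w_node z l : ~~ L z -> L l -> w z l = (ell adj d z l)%:R.
Proof. by rewrite /wvec => /negPf -> ->. Qed.

Lemma w_leaf z l : L z -> L l -> w z l = (l == z)%:R.
Proof. by rewrite /wvec => -> ->. Qed.

Lemma w_node_gt0 z l : ~~ L z -> L l -> 0 < w z l.
Proof. by move=> nz ll; rewrite w_node // ltr0n ell_gt0. Qed.

Lemma Bs_ge (S : pred V) (f : V -> R) l : (forall t, 0 <= f t) -> L l -> S l -> f l <= Bs S f.
Proof.
move=> f0 ll sl; rewrite /Bs (bigD1 l) /=; last by rewrite ll sl.
by rewrite lerDl sumr_ge0.
Qed.

Lemma Bs_ge0 (S : pred V) (f : V -> R) : (forall t, 0 <= f t) -> 0 <= Bs S f.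
Proof. by move=> f0; rewrite sumr_ge0. Qed.

Lemma Tot_split (S : pred V) f : Tot f = Bs S f + Bs (predC S) f.
Proof. by rewrite /Tot (bigID S). Qed.

Lemma Tot_Bs f : Tot f = Bs predT f.
Proof. by apply: eq_bigl => l; rewrite andbT. Qed.

Lemma Tot_pos z : 0 < Tot (w z).
Proof.
rewrite Tot_Bs; case lz: (L z).
  apply: (lt_le_trans _ (Bs_ge (@w_ge0 z) lz isT)).
  by rewrite w_leaf // eqxx ltr01.
case: exists_leaf => l ll.
apply: (lt_le_trans _ (Bs_ge (@w_ge0 z) ll isT)).
by rewrite w_node_gt0 ?lz.
Qed.

Lemma norm1E z : norm1 (w z) = Tot (w z).
Proof.
rewrite /norm1 (bigID L) /= [X in _ + X]big1 ?addr0.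
  by apply: eq_bigr => l _; rewrite ger0_norm // w_ge0.
by move=> l nl; rewrite w_nonleaf // normr0.
Qed.

Lemma rvE z y : rv z y = w z y / Tot (w z).
Proof. by rewrite /rho_vert norm1E. Qed.

Lemma Bs_rv (S : pred V) z : Bs S (rv z) = Bs S (w z) / Tot (w z).
Proof. by rewrite /Bs mulr_suml; apply: eq_bigr => l _; rewrite rvE. Qed.

Definition beta S z := Bs S (rv z).

Lemma beta_le (S : pred V) y y' : Bs S (w y') * Tot (w y) <= Tot (w y') * Bs S (w y) ->
  beta S y' <= beta S y.
Proof.
move=> h; rewrite /beta !Bs_rv ler_pdivrMr ?Tot_pos // mulrAC ler_pdivlMr ?Tot_pos //.
by rewrite [Bs S (w y) * _]mulrC.
Qed.

Lemma beta_lt (S : pred V) y y' : Bs S (w y') * Tot (w y) < Tot (w y') * Bs S (w y) ->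
  beta S y' < beta S y.
Proof.
move=> h; rewrite /beta !Bs_rv ltr_pdivrMr ?Tot_pos // mulrAC ltr_pdivlMr ?Tot_pos //.
by rewrite [Bs S (w y) * _]mulrC.
Qed.

Lemma leaf_notnode z : ~~ L z = is_node adj z.
Proof. by []. Qed.

Lemma step_le (S : pred V) y y' : adj y y' -> is_node adj y ->
  (forall l, L l -> S l -> side y' y l) -> beta S y' <= beta S y.
Proof.
move=> ayy' ny hS; apply: beta_le.
have Tge0 z : 0 <= Tot (w z) by apply: sumr_ge0 => t _; exact: w_ge0.
case ly': (L y').
  have -> : Bs S (w y') = 0.
    rewrite /Bs big1 // => l /andP[ll sl]; rewrite w_leaf //.
    have -> : (l == y') = false.
      by apply/eqP => e; subst; exact: (side_not (hS _ ll sl)).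
    by [].
  by rewrite mul0r mulr_ge0 // Bs_ge0 // => t; exact: w_ge0.
have ny' : is_node adj y' by rewrite -leaf_notnode ly'.
have nly : ~~ L y by rewrite leaf_notnode.
have nly' : ~~ L y' by rewrite ly'.
have ay'y : adj y' y by rewrite adj_sym.
set dd : R := (d y y')%:R; set P : R := (Pf y' y)%:R.
have ddpos : 0 < dd by rewrite ltr0n; apply: wpos.
have key l : L l -> P * w y l <= w y' l * dd /\ (S l -> w y' l * dd = P * w y l).
  move=> ll.
  have eqS : side y' y l -> w y' l * dd = P * w y l.
    case=> q [sq nq]; have := ell_step ay'y ny' ny sq nq.
    move/(congr1 (fun n => n%:R : R)); rewrite !natrM -!w_node //.
  split; last by move/(hS _ ll)/eqS.
  case: (side_dich l ay'y) => [/eqS -> //| [q [sq nq]]].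
  have := ell_step ayy' ny ny' sq nq.
  move/(congr1 (fun n => n%:R : R)); rewrite !natrM -!w_node // => e.
  have := det_lt ayy' ny ny'; rewrite -(ltr_nat R) !natrM => dl.
  have bpos : 0 < ((Pf y y')%:R : R) by rewrite ltr0n Pf_gt0.
  have wy0 := w_ge0 y l.
  rewrite -(ler_pM2l bpos).
  have -> : (Pf y y')%:R * (w y' l * dd) = dd * (w y l * (d y' y)%:R) by rewrite e; ring.
  nra.
have hB : Bs S (w y') * dd = P * Bs S (w y).
  rewrite /Bs mulr_suml mulr_sumr; apply: eq_bigr => l /andP[ll sl].
  by apply: (key l ll).2.
have hT : P * Tot (w y) <= Tot (w y') * dd.
  rewrite /Tot mulr_suml mulr_sumr; apply: ler_sum => l ll.
  by apply: (key l ll).1.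
have B0 : 0 <= Bs S (w y) by apply: Bs_ge0 => t; exact: w_ge0.
rewrite -(ler_pM2r ddpos) mulrAC hB.
have := ler_wpM2l B0 hT.
have -> : P * Bs S (w y) * Tot (w y) = Bs S (w y) * (P * Tot (w y)) by ring.
have -> : Tot (w y') * Bs S (w y) * dd = Bs S (w y) * (Tot (w y') * dd) by ring.
done.
Qed.

Definition Sd p q : pred V := fun l => `[< side p q l >].

Lemma SdP p q l : Sd p q l <-> side p q l.
Proof. by rewrite /Sd; split => [/asboolP|/asboolP]. Qed.

Lemma strict_lt p q : adj p q -> beta (Sd p q) p < beta (Sd p q) q.
Proof.
move=> apq; apply: beta_lt.
have aqp : adj q p by rewrite adj_sym.
have pnq : p != q by apply/eqP => e; subst; rewrite adj_irr in apq.
have [lq [llq slq]] := side_leaf apq.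
have [lp [llp slp]] := side_leaf aqp.
have Slq : Sd p q lq by apply/SdP.
have nSlp : ~~ Sd p q lp by apply/negP => /SdP h; exact: (side_disj apq h slp).
have Sq : Sd p q q by apply/SdP; apply: side_self.
have nSp : ~~ Sd p q p by apply/negP => /SdP h; exact: (side_not h).
set S := Sd p q in Slq nSlp Sq nSp *.
have wq0 := @w_ge0 q; have wp0 := @w_ge0 p.
have Bq : 0 < Bs S (w q).
  case hq: (L q).
    by apply: (lt_le_trans _ (Bs_ge wq0 hq Sq)); rewrite w_leaf // eqxx ltr01.
  by apply: (lt_le_trans _ (Bs_ge wq0 llq Slq)); rewrite w_node_gt0 ?hq.
case hp: (L p).
  have -> : Bs S (w p) = 0.
    rewrite /Bs big1 // => l /andP[ll sl]; rewrite (w_leaf hp ll).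
    by have -> : (l == p) = false by apply/eqP => e; move: sl; rewrite e (negPf nSp).
  by rewrite mul0r mulr_gt0 // Tot_pos.
have np : is_node adj p by rewrite -leaf_notnode hp.
have Cp : 0 < Bs (predC S) (w p).
  by apply: (lt_le_trans _ (Bs_ge wp0 llp nSlp)); rewrite w_node_gt0 ?hp.
have Bp0 : 0 <= Bs S (w p) by apply: Bs_ge0.
case hq: (L q).
  have Cq : Bs (predC S) (w q) = 0.
    rewrite /Bs big1 // => l /andP[ll sl]; rewrite (w_leaf hq ll).
    by have -> : (l == q) = false by apply/eqP => e; move: sl; rewrite e /= Sq.
  rewrite (Tot_split S (w q)) (Tot_split S (w p)) Cq addr0.
  by rewrite ltr_pM2r // ltrDl.
have nq : is_node adj q by rewrite -leaf_notnode hq.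
have Cq : 0 < Bs (predC S) (w q).
  by apply: (lt_le_trans _ (Bs_ge wq0 llp nSlp)); rewrite w_node_gt0 ?hq.
have nlp : ~~ L p by rewrite hp.
have nlq : ~~ L q by rewrite hq.
set dqp : R := (d q p)%:R; set dpq : R := (d p q)%:R.
set Ppq : R := (Pf p q)%:R; set Pqp : R := (Pf q p)%:R.
have dqp0 : 0 < dqp by rewrite ltr0n; apply: wpos.
have Pqp0 : 0 < Pqp by rewrite ltr0n Pf_gt0.
have dl : Ppq * Pqp < dpq * dqp by rewrite -!natrM ltr_nat det_lt.
have hB : Bs S (w p) * dqp = Ppq * Bs S (w q).
  rewrite /Bs mulr_suml mulr_sumr; apply: eq_bigr => l /andP[ll /SdP [r [sr nr]]].
  have := ell_step apq np nq sr nr.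
  by move/(congr1 (fun n => n%:R : R)); rewrite !natrM -!w_node.
have hC : Bs (predC S) (w q) * dpq = Pqp * Bs (predC S) (w p).
  rewrite /Bs mulr_suml mulr_sumr; apply: eq_bigr => l /andP[ll nsl].
  case: (side_dich l apq) => [h|[r [sr nr]]]; first by move: nsl; rewrite /= /S; move/SdP: h => ->.
  have := ell_step aqp nq np sr nr.
  by move/(congr1 (fun n => n%:R : R)); rewrite !natrM -!w_node.
rewrite (Tot_split S (w q)) (Tot_split S (w p)).
set B' := Bs S (w p); set C' := Bs (predC S) (w p).
set B := Bs S (w q); set C := Bs (predC S) (w q).
rewrite -(ltr_pM2r (mulr_gt0 dqp0 Pqp0)).
have -> : B' * (B + C) * (dqp * Pqp) = (B' * dqp) * Pqp * (B + C) by ring.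
have -> : (B' + C') * B * (dqp * Pqp) = (B' * dqp) * Pqp * B + (Pqp * C') * dqp * B by ring.
rewrite hB -hC.
have dl' : 0 < dpq * dqp - Ppq * Pqp by rewrite subr_gt0.
have := mulr_gt0 (mulr_gt0 Bq Cq) dl'.
move=> h; rewrite -subr_gt0; move: h.
have -> : Ppq * B * Pqp * B + C * dpq * dqp * B - Ppq * B * Pqp * (B + C)
   = B * C * (dpq * dqp - Ppq * Pqp) by ring.
done.
Qed.

Lemma mono (S : pred V) x y z r : adj x y -> (forall l, L l -> S l -> side y x l) ->
  simple_path adj y z r -> x \notin y :: r -> beta S z <= beta S y.
Proof.
elim: r x y => [|y' r IH] x y axy hS sp nx.
  by case/and3P: sp => _ /eqP <- _.
case/sp_inv: sp => ayy' sr ny.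
have xny' : x != y' by apply/negP => /eqP e; subst; rewrite !inE eqxx !orbT in nx.
have nodey : is_node adj y by apply: (two_nbrs _ ayy' xny'); rewrite adj_sym.
have hS' l : L l -> S l -> side y' y l.
  by move=> ll sl; apply: (side_step axy ayy' xny' (hS l ll sl)).
exact: le_trans (IH y y' ayy' hS' sr ny) (step_le ayy' nodey hS').
Qed.

Lemma Tot_rv z : Tot (rv z) = 1.
Proof.
rewrite /Tot; under eq_bigr => l _ do rewrite rvE.
by rewrite -mulr_suml -/(Tot _) divff // gt_eqF // Tot_pos.
Qed.

Lemma beta_compl (S S' : pred V) z : (forall l, L l -> S' l = ~~ S l) ->
  beta S' z = 1 - beta S z.
Proof.
move=> h; rewrite /beta -(Tot_rv z) (Tot_split S) addrAC subrr add0r.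
apply: eq_bigl => l; case ll: (L l) => //=; by rewrite h.
Qed.

Lemma Cp p q z : adj p q -> side q p z -> beta (Sd p q) z <= beta (Sd p q) p.
Proof.
move=> apq [r [sr nr]]; apply: (mono _ _ sr nr); first by rewrite adj_sym.
by move=> l _ /SdP.
Qed.

Lemma Cq p q z : adj p q -> side p q z -> beta (Sd p q) q <= beta (Sd p q) z.
Proof.
move=> apq h.
have aqp : adj q p by rewrite adj_sym.
have := Cp aqp h.
have hc l : L l -> Sd q p l = ~~ Sd p q l.
  move=> _; apply/idP/idP.
    by move/SdP => h1; apply/negP => /SdP h2; exact: (side_disj apq h2 h1).
  move/negP => h1; case: (side_dich l apq) => h2; first by exfalso; apply: h1; apply/SdP.
  by apply/SdP.
rewrite !(beta_compl _ hc); lra.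
Qed.

Lemma Bs_pt (S : pred V) a b s :
  Bs S (rho_pt adj d a b s) = (1 - s) * beta S a + s * beta S b.
Proof. by rewrite /Bs /rho_pt big_split /= -!mulr_sumr. Qed.

Lemma vertex_inj z z' : rv z = rv z' -> z = z'.
Proof.
move=> E; case: (eqVneq z z') => // nz; exfalso.
have [p sp] := path_ex z z'.
case: p sp => [|y r] sp.
  by case/and3P: sp => _ /eqP e _; move: nz; rewrite -e eqxx.
case/sp_inv: sp => azy sr nzr.
have h1 := strict_lt azy.
have h2 := Cq azy (ex_intro _ r (conj sr nzr)).
have : beta (Sd z y) z = beta (Sd z y) z' by rewrite /beta E.
move=> e; rewrite -e in h2; have := lt_le_trans h1 h2; by rewrite ltxx.
Qed.

Lemma interior a b a' b' (s t : R) : adj a b -> adj a' b' -> 0 < s < 1 -> 0 <= t <= 1 ->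
  rho_pt adj d a b s = rho_pt adj d a' b' t -> realize a b s = realize a' b' t.
Proof.
move=> aab aa'b' /andP[s0 s1] /andP[t0 t1] E.
have lin := congr1 (Bs (Sd a b)) E; rewrite !Bs_pt in lin.
have hlt := strict_lt aab.
have aba : adj b a by rewrite adj_sym.
have ab'a' : adj b' a' by rewrite adj_sym.
have [[ea eb]|[[ea eb]|[[h1 h2]|[h1 h2]]]] :
  (a' = a /\ b' = b) \/ (a' = b /\ b' = a) \/
  ((side a b a' /\ side a b b') \/ (side b a a' /\ side b a b')).
- case: (side_dich a' aab) => h1; case: (side_dich b' aab) => h2.
  + by right; right; left.
  + by right; left; apply: cross.
  + by left; have [] := cross aab ab'a' h2 h1.
  + by right; right; right.
- subst a' b'.
  have : (s - t) * (beta (Sd a b) b - beta (Sd a b) a) = 0.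
    set A := beta _ a in lin *; set B := beta _ b in lin *.
    have -> : (s - t) * (B - A) = ((1 - s) * A + s * B) - ((1 - t) * A + t * B) by ring.
    by rewrite lin subrr.
  move/eqP; rewrite mulf_eq0 => /orP[|]; first by rewrite subr_eq0 => /eqP ->.
  by rewrite subr_eq0 => /eqP e; rewrite e ltxx in hlt.
- subst a' b'.
  have : (s - (1 - t)) * (beta (Sd a b) b - beta (Sd a b) a) = 0.
    set A := beta _ a in lin *; set B := beta _ b in lin *.
    have -> : (s - (1 - t)) * (B - A) = ((1 - s) * A + s * B) - ((1 - t) * B + t * A) by ring.
    by rewrite lin subrr.
  move/eqP; rewrite mulf_eq0 => /orP[|].
    rewrite subr_eq0 => /eqP ->; apply: funext => y; rewrite /realize; ring.
  by rewrite subr_eq0 => /eqP e; rewrite e ltxx in hlt.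
- have c1 := Cq aab h1; have c2 := Cq aab h2; exfalso; nra.
- have c1 := Cp aab h1; have c2 := Cp aab h2; exfalso; nra.
Qed.

End Main.

Local Open Scope ring_scope.

Theorem theorem5p11 (R : realFieldType) (V : finType) (adj : rel V)
    (d : V -> V -> nat) :
  splice_tree adj -> weights_pos adj d -> edge_determinant adj d ->
  forall (a b a' b' : V) (s t : R),
    adj a b -> adj a' b' -> 0 <= s <= 1 -> 0 <= t <= 1 ->
    rho_pt adj d a b s = rho_pt adj d a' b' t ->
    realize a b s = realize a' b' t.
Proof.
move=> [[sym [irr uq]] [exv _]] wp dt a b a' b' s t aab aa'b' hs ht E.
have pex : forall u v, exists p, simple_path adj u v p.
  by move=> u v; case: (uq u v) => p [h _]; exists p.
have pun : forall u v p1 p2, simple_path adj u v p1 -> simple_path adj u v p2 -> p1 = p2.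
  by move=> u v p1 p2 h1 h2; case: (uq u v) => p [_ h]; rewrite -(h _ h1) -(h _ h2).
have I := interior sym irr pex pun wp dt exv.
case: (boolP ((0 < s) && (s < 1))) => hs'; first exact: I.
case: (boolP ((0 < t) && (t < 1))) => ht'.
  by symmetry; apply: I => //; symmetry.
have endp : forall (u v : V) (x : R), 0 <= x <= 1 -> ~~ ((0 < x) && (x < 1)) ->
    exists z, rho_pt adj d u v x = rho_vert adj d R z /\
              realize u v x = (fun y => (y == z)%:R).
  move=> u v x /andP[x0 x1]; rewrite negb_and -!leNgt => /orP[h|h].
    have -> : x = 0 by apply/le_anti; rewrite h x0.
    by exists u; split; apply: funext => y; rewrite /rho_pt /realize; ring.
  have -> : x = 1 by apply/le_anti; rewrite x1 h.
  by exists v; split; apply: funext => y; rewrite /rho_pt /realize; ring.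
have [z1 [e1 f1]] := endp a b s hs hs'.
have [z2 [e2 f2]] := endp a' b' t ht ht'.
rewrite e1 e2 in E; have := vertex_inj sym irr pex pun wp dt exv E => ez.
by rewrite f1 f2 ez.
Qed.
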